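(* Let $(S,\rightarrow)$ be a PNTS, $X$ a variable and $\rho$ an interpretation. Then for every $s\in S$: (i) $\llbracket\mathbb P_{>0}(\Diamond X)\rrbracket_\rho(s)=1$ iff there exists $t\in S$ with $s\rightsquigarrow t$ and $\rho(X)(t)>0$; (ii) $\llbracket\mathbb P_{=1}(\Box X)\rrbracket_\rho(s)=1$ iff for all $t\in S$, $s\rightsquigarrow t$ implies $\rho(X)(t)=1$.
   Context: A PNTS is $(S,\rightarrow)$ with $\rightarrow\subseteq S\times\mathcal D(S)$, $\mathcal D(S)$ the probability distributions $d:S\to[0,1]$ with $\sum_sd(s)=1$. $s\rightsquigarrow t$ iff there is $d$ with $s\to d$ and $d(t)>0$. An interpretation $\rho$ assigns functions $S\to[0,1]$ to variables. Semantics: $\llbracket X\rrbracket_\rho=\rho(X)$, $\llbracket\Diamond\phi\rrbracket_\rho(x)=\sup_{x\to d}\sum_yd(y)\llbracket\phi\rrbracket_\rho(y)$ (empty sup $=0$), $\llbracket\Box\phi\rrbracket_\rho(x)=\inf_{x\to d}\sum_yd(y)\llbracket\phi\rrbracket_\rho(y)$ (empty inf $=1$), $\oplus$ and $\odot$ pointwise $\min(1,a+b)$ and $\max(0,a+b-1)$, and $\mu Y.\phi$, $\nu Y.\phi$ least/greatest fixed points of $f\mapsto\llbracket\phi\rrbracket_{\rho[f/Y]}$. $\mathbb P_{>0}\phi=\mu Y.(Y\oplus\phi)$ and $\mathbb P_{=1}\phi=\nu Y.(Y\odot\phi)$ with $Y$ not occurring in $\phi$. *)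

(* Defs.v *)
From HB Require Import structures.
From mathcomp Require Import all_boot all_order all_algebra.
From mathcomp Require Import all_classical all_reals.
From mathcomp Require Import ereal esum.

Set Implicit Arguments.
Unset Strict Implicit.
Unset Printing Implicit Defensive.
Import Order.TTheory GRing.Theory Num.Theory.
Local Open Scope classical_set_scope.
Local Open Scope ring_scope.

Section PNTS.
Variable R : realType.
Variable S : Type.

Definition is_distr (d : S -> R) : Prop :=
  (forall s, 0 <= d s <= 1) /\ (\esum_(s in [set: {classic S}]) (d s)%:E = 1)%E.

Definition is_PNTS (trans : S -> (S -> R) -> Prop) : Prop :=
  forall s d, trans s d -> is_distr d.

Definition reach (trans : S -> (S -> R) -> Prop) (s t : S) : Prop :=
  exists d, trans s d /\ 0 < d t.

Definition unitfun (f : S -> R) : Prop := forall s, 0 <= f s <= 1.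

Definition expect (d f : S -> R) : R :=
  fine (\esum_(y in [set: {classic S}]) (d y * f y)%:E)%E.

Definition sup0 (A : set R) : R := if A == set0 then 0 else sup A.
Definition inf1 (A : set R) : R := if A == set0 then 1 else inf A.

(* least / greatest fixed points in the complete lattice [0,1]^S
   (Knaster-Tarski: meet of prefixed points / join of postfixed points) *)
Definition lfp (F : (S -> R) -> (S -> R)) : S -> R :=
  fun s => inf [set g s | g in [set g | unitfun g /\ forall t, F g t <= g t]].
Definition gfp (F : (S -> R) -> (S -> R)) : S -> R :=
  fun s => sup [set g s | g in [set g | unitfun g /\ forall t, g t <= F g t]].

End PNTS.

Inductive form (V : Type) : Type :=
| FVar of V
| FDia of form V
| FBox of form V
| FOplus of form V & form V
| FOdot of form V & form V
| FMu of V & form V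
| FNu of V & form V.

Definition upd (V : eqType) (T : Type) (rho : V -> T) (Y : V) (f : T) : V -> T :=
  fun Z => if Z == Y then f else rho Z.

Fixpoint sem (R : realType) (S : Type) (trans : S -> (S -> R) -> Prop)
  (V : eqType) (phi : form V) (rho : V -> S -> R) : S -> R :=
  match phi with
  | FVar X => rho X
  | FDia p => fun x =>
      sup0 [set expect d (sem trans p rho) | d in [set d | trans x d]]
  | FBox p => fun x =>
      inf1 [set expect d (sem trans p rho) | d in [set d | trans x d]]
  | FOplus p q => fun x => Num.min 1 (sem trans p rho x + sem trans q rho x)
  | FOdot p q => fun x => Num.max 0 (sem trans p rho x + sem trans q rho x - 1)
  | FMu Y p => lfp (fun f => sem trans p (upd rho Y f))
  | FNu Y p => gfp (fun f => sem trans p (upd rho Y f))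
  end.

(* P_{>0} phi = mu Y.(Y (+) phi), P_{=1} phi = nu Y.(Y (.) phi), Y not in phi *)
Definition PPos (V : Type) (Y : V) (phi : form V) : form V :=
  FMu Y (FOplus (FVar Y) phi).
Definition POne (V : Type) (Y : V) (phi : form V) : form V :=
  FNu Y (FOdot (FVar Y) phi).

(* Main.v *)
Require Import Defs.
From HB Require Import structures.
From mathcomp Require Import all_boot all_order all_algebra.
From mathcomp Require Import all_classical all_reals.
From mathcomp Require Import ereal esum.
Import Order.TTheory GRing.Theory Num.Theory.
Set Implicit Arguments.
Local Open Scope classical_set_scope.
Local Open Scope ring_scope.

Section Aux.
Variables (R : realType) (S : Type).

Lemma esum_ge_pt (a : {classic S} -> \bar R) t :
  (a t <= \esum_(y in [set: {classic S}]) a y)%E.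
Proof.
apply: esum_ge; exists [set t]; first by split; [exact: finite_set1|].
by rewrite fsbig_set1.
Qed.

Lemma bar01 {e : \bar R} : (0 <= e <= 1)%E -> e = (fine e)%:E /\ 0 <= fine e <= 1.
Proof.
by case: e => [r||] //= /andP[h0 h1]; split => //; apply/andP; split.
Qed.

Lemma esum_dist_le (d f : S -> R) : is_distr d -> unitfun f ->
  (0 <= \esum_(y in [set: {classic S}]) (d y * f y)%:E <= 1)%E.
Proof.
move=> [d01 d1] f01; apply/andP; split.
  apply: esum_ge0 => y _; rewrite lee_fin.
  by case/andP: (d01 y) => ? _; case/andP: (f01 y) => ? _; rewrite mulr_ge0.
rewrite -d1; apply: le_esum => y _; rewrite lee_fin.
case/andP: (d01 y) => ? _; case/andP: (f01 y) => ? ?.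
by rewrite ler_piMr.
Qed.

Lemma expect01 (d f : S -> R) : is_distr d -> unitfun f ->
  0 <= expect d f <= 1.
Proof. by move=> hd hf; case: (bar01 (esum_dist_le hd hf)). Qed.

Lemma expect_pos (d f : S -> R) : is_distr d -> unitfun f ->
  (0 < expect d f <-> exists t, 0 < d t /\ 0 < f t).
Proof.
move=> hd hf; have [d01 _] := hd.
have [E _] := bar01 (esum_dist_le hd hf).
split.
  move=> hpos; apply: contrapT => hno.
  have h0 : expect d f = 0.
    rewrite /expect esum1 // => y _.
  case/andP: (d01 y) => dy _; case/andP: (hf y) => fy _.
  congr (_%:E); apply/eqP; rewrite mulf_eq0.
  have [hdy|hdy] := leP (d y) 0; first by rewrite eq_le dy hdy.
  have [hfy|hfy] := leP (f y) 0; first by rewrite orbC eq_le fy hfy.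
  by exfalso; apply: hno; exists y.
  by move: hpos; rewrite h0 ltxx.
move=> [t [dt ft]].
have := esum_ge_pt (fun y : {classic S} => (d y * f y)%:E) t.
rewrite /expect E lee_fin => /=; apply: lt_le_trans.
by rewrite mulr_gt0.
Qed.

Lemma expect_one (d f : S -> R) : is_distr d -> unitfun f ->
  (1 <= expect d f <-> forall t, 0 < d t -> f t = 1).
Proof.
move=> hd hf; have [d01 d1] := hd.
have [E _] := bar01 (esum_dist_le hd hf).
split; last first.
  move=> h; rewrite /expect.
  have -> : (\esum_(y in [set: {classic S}]) (d y * f y)%:E =
     \esum_(y in [set: {classic S}]) (d y)%:E)%E; last by rewrite d1.
  apply: eq_esum => y _; case/andP: (d01 y) => dy _.
  have [hdy|hdy] := leP (d y) 0; last by rewrite h // mulr1.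
  have -> : d y = 0 by apply/eqP; rewrite eq_le dy hdy.
  by rewrite mul0r.
move=> h1 t dt; apply: contrapT => hne.
have ft1 : f t < 1 by case/andP: (hf t) => _ ?; rewrite lt_neqAle; apply/andP; split => //; apply/eqP.
have hD : (\esum_(y in [set: {classic S}]) (d y * f y)%:E +
           \esum_(y in [set: {classic S}]) (d y * (1 - f y))%:E = 1)%E.
  rewrite -esumD; last 2 first.
  - move=> y _; rewrite lee_fin; case/andP: (d01 y) => ? _; case/andP: (hf y) => ? _.
    by rewrite mulr_ge0.
  - move=> y _; rewrite lee_fin; case/andP: (d01 y) => ? _; case/andP: (hf y) => _ ?.
    by rewrite mulr_ge0 // subr_ge0.
  rewrite -d1; apply: eq_esum => y _; rewrite -EFinD; congr (_%:E).
  by rewrite -mulrDr addrC subrK mulr1.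
have h2 := esum_ge_pt (fun y : {classic S} => (d y * (1 - f y))%:E) t.
move: hD h2 h1; rewrite E /expect.
move: (fine _) => r1.
move: (\esum_(y in [set: {classic S}]) (d y * (1 - f y))%:E)%E => e2.
case: e2 => [r||] //=.
rewrite -EFinD => /(congr1 fine) /= hr; rewrite lee_fin => hle h1.
have hp : 0 < d t * (1 - f t) by rewrite mulr_gt0 // subr_gt0.
have : r <= 0.
  have -> : r = 1 - r1 by rewrite -hr addrC addKr.
  by rewrite subr_le0.
by move=> hr0; move: (lt_le_trans hp (le_trans hle hr0)); rewrite ltxx.
Qed.
End Aux.
Section Fix.
Variables (R : realType) (S : Type).

Lemma lfp_lemma (a : S -> R) s :
  lfp (fun g : S -> R => fun x => Num.min 1 (g x + a x)) s = 1 <-> 0 < a s.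
Proof.
rewrite /lfp; set G := [set _ | _ in _].
have lb0 : lbound G 0.
  by move=> _ [g [hg _] <-]; case/andP: (hg s).
split.
  move=> h; apply: contrapT => /negP; rewrite -leNgt => has.
  pose g0 := fun x => if 0 < a x then 1 else 0 : R.
  have Gg0 : G (g0 s).
    exists g0 => //; split.
      by move=> x; rewrite /g0; case: ifP => _; rewrite ?lexx ?ler01.
    move=> x; rewrite /g0; case: ifPn => hx.
      by rewrite ge_min lexx.
    by rewrite add0r ge_min [X in _ || X]leNgt hx orbT.
  have : inf G <= g0 s by apply: ge_inf => //; exists 0.
  by rewrite h /g0 ltNge has /= ler10.
move=> has.
have G1 : forall y, G y -> y = 1.
  move=> _ [g [hg hpre] <-]; case/andP: (hg s) => _ g1.
  apply: contrapT => hne.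
  have glt : g s < 1 by rewrite lt_neqAle g1 andbT; apply/eqP.
  have := hpre s; rewrite leNgt lt_min glt /=.
  by rewrite -subr_gt0 addrAC subrr add0r has.
have Gne : G 1.
  exists (fun _ => 1) => //; split.
    by move=> x; rewrite lexx ler01.
  by move=> x; rewrite ge_min lexx.
apply/eqP; rewrite eq_le; apply/andP; split.
  by apply: ge_inf => //; exists 0.
by apply: lb_le_inf; [exists 1 | move=> y /G1 ->].
Qed.

Lemma gfp_lemma (b : S -> R) s :
  gfp (fun g : S -> R => fun x => Num.max 0 (g x + b x - 1)) s = 1 <-> 1 <= b s.
Proof.
rewrite /gfp; set G := [set _ | _ in _].
have ub1 : ubound G 1.
  by move=> _ [g [hg _] <-]; case/andP: (hg s).
have G0 : G 0.
  exists (fun _ => 0) => //; split.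
    by move=> x; rewrite lexx ler01.
  by move=> x; rewrite le_max lexx.
split.
  move=> h; apply: contrapT => /negP; rewrite -ltNge => hbs.
  have Gle : ubound G 0.
    move=> _ [g [hg hpost] <-]; case/andP: (hg s) => g0 _.
    rewrite leNgt; apply/negP => gpos.
    have := hpost s; rewrite leNgt gt_max gpos /=.
    by rewrite ltrBlDr ltrD2l hbs.
  have : sup G <= 0 by apply: ge_sup => //; exists 0.
  by rewrite h ler10.
move=> hbs.
pose g0 := fun x => if 1 <= b x then 1 else 0 : R.
have Gg0 : G 1.
  exists g0; last by rewrite /g0 hbs.
  split.
    by move=> x; rewrite /g0; case: ifP => _; rewrite ?lexx ?ler01.
  move=> x; rewrite /g0; case: ifPn => hx.
    by rewrite le_max addrC addKr hx orbT.
  by rewrite le_max lexx.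
apply/eqP; rewrite eq_le; apply/andP; split.
  by apply: ge_sup => //; exists 1.
by apply: sup_upper_bound => //; split; [exists 1 | exists 1].
Qed.
End Fix.
Unset Implicit Arguments.
Close Scope classical_set_scope.
Theorem mainTheorem10 (R : realType) (S : Type)
  (trans : S -> (S -> R) -> Prop) (V : eqType) (X Y : V)
  (rho : V -> S -> R) :
  is_PNTS trans ->
  (forall Z, unitfun (rho Z)) ->
  Y != X ->
  forall s : S,
    (sem trans (PPos Y (FDia (FVar X))) rho s = 1 <->
       exists t, reach trans s t /\ 0 < rho X t) /\
    (sem trans (POne Y (FBox (FVar X))) rho s = 1 <->
       forall t, reach trans s t -> rho X t = 1).
Proof.
move=> hP hrho hYX s.
have hXY : (X == Y) = false by rewrite eq_sym; apply/negbTE.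
pose E x := [set expect d (rho X) | d in [set d | trans x d]]%classic.
have E01 : forall x e, E x e -> 0 <= e <= 1.
  by move=> x _ [d hd <-]; apply: expect01 => //; apply: hP hd.
split.
  rewrite /PPos /=.
  have -> : (fun f : S -> R => fun x => Num.min 1 (upd rho Y f Y x +
      Defs.sup0 [set expect d (upd rho Y f X) | d in [set d | trans x d]]%classic))
     = (fun g : S -> R => fun x => Num.min 1 (g x + Defs.sup0 (E x))).
    by apply: funext => f; rewrite /upd eqxx hXY.
  rewrite lfp_lemma /Defs.sup0.
  case: eqP => hE.
    rewrite ltxx; split => // -[t [[d [hd _]] _]].
    have : E s (expect d (rho X)) by exists d.
    by rewrite hE.
  have hs : has_sup (E s).
    split; first by apply/set0P/eqP.
    by exists 1 => e /E01 /andP[].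
  split.
    move=> hpos; have [e Ee] := sup_adherent hpos hs.
    rewrite subrr; case: Ee => d hd <- hlt.
    have [t [dt xt]] := (expect_pos (hP _ _ hd) (hrho X)).1 hlt.
    by exists t; split => //; exists d.
  move=> [t [[d [hd dt]] xt]].
  have hlt : 0 < expect d (rho X).
    by apply/(expect_pos (hP _ _ hd) (hrho X)).2; exists t.
  apply: lt_le_trans hlt _; apply: sup_upper_bound => //; by exists d.
rewrite /POne /=.
have -> : (fun f : S -> R => fun x => Num.max 0 (upd rho Y f Y x +
    Defs.inf1 [set expect d (upd rho Y f X) | d in [set d | trans x d]]%classic - 1))
   = (fun g : S -> R => fun x => Num.max 0 (g x + Defs.inf1 (E x) - 1)).
  by apply: funext => f; rewrite /upd eqxx hXY.
rewrite gfp_lemma /Defs.inf1.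
case: eqP => hE.
  rewrite lexx; split => // _ t [d [hd _]].
  have : E s (expect d (rho X)) by exists d.
  by rewrite hE.
have hne : (E s !=set0)%classic by apply/set0P/eqP.
have hlb : has_lbound (E s) by exists 0 => e /E01 /andP[].
split.
  move=> h1 t [d [hd dt]].
  have Ee : E s (expect d (rho X)) by exists d.
  have := ge_inf hlb Ee => hle.
  by apply: (expect_one (hP _ _ hd) (hrho X)).1 (le_trans h1 hle) _ dt.
move=> h; apply: lb_le_inf => // _ [d hd <-].
apply/(expect_one (hP _ _ hd) (hrho X)).2 => t dt.
by apply: h; exists d.
Qed.
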